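(* Let $\mathbf{A}\in\mathbb{R}^{n\times d}$ be nonzero, and for $\ell\in[m]$ let $\mathbf{r}^{(\ell)}\in\{-1,1\}^n$ and $\boldsymbol{\Omega}^{(\ell)}=\operatorname{diag}(\mathbf{r}^{(\ell)})$. Let $$\mathbf{P}=\big[\mathbf{A}^\top\boldsymbol{\Omega}^{(1)}\,|\,\cdots\,|\,\mathbf{A}^\top\boldsymbol{\Omega}^{(m)}\big]^\top\in\mathbb{R}^{mn\times d}$$ be the constraint matrix of the one-bit polyhedron associated with $\mathbf{A}\mathbf{x}=\mathbf{y}$. Then $\kappa(\mathbf{P})=\kappa(\mathbf{A})$.
   Context: Scaled condition number $\kappa(\mathbf{C})=\|\mathbf{C}\|_{\mathrm F}\|\mathbf{C}^\dagger\|_2$ ($\mathbf{C}^\dagger$ the Moore–Penrose pseudoinverse, $\|\cdot\|_2$ the spectral norm). *)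

(* Defs.v *)
From HB Require Import structures.
From Stdlib Require Import ClassicalEpsilon.
From mathcomp Require Import all_boot all_order all_algebra.
From mathcomp Require Import all_classical all_reals.
Set Implicit Arguments. Unset Strict Implicit. Unset Printing Implicit Defensive.
Import Order.TTheory GRing.Theory Num.Theory.
Local Open Scope ring_scope.
Local Open Scope classical_set_scope.

Definition frob_norm (R : realType) (p q : nat) (C : 'M[R]_(p, q)) : R :=
  Num.sqrt (\sum_(i < p) \sum_(j < q) C i j ^+ 2).

Definition vnorm2 (R : realType) (q : nat) (x : 'cV[R]_q) : R :=
  Num.sqrt (\sum_(i < q) x i 0 ^+ 2).

Definition spec_norm (R : realType) (p q : nat) (C : 'M[R]_(p, q)) : R :=
  sup [set vnorm2 (C *m x) | x in [set x : 'cV[R]_q | vnorm2 x = 1]].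

Definition is_pinv (R : realType) (p q : nat) (C : 'M[R]_(p, q)) (X : 'M[R]_(q, p)) : Prop :=
  [/\ C *m X *m C = C, X *m C *m X = X, (C *m X)^T = C *m X & (X *m C)^T = X *m C].

Definition pinv (R : realType) (p q : nat) (C : 'M[R]_(p, q)) : 'M[R]_(q, p) :=
  epsilon (inhabits 0) (is_pinv C).

Definition kappa (R : realType) (p q : nat) (C : 'M[R]_(p, q)) : R :=
  frob_norm C * spec_norm (pinv C).

Definition onebit_P (R : realType) (n d m : nat) (A : 'M[R]_(n, d))
  (r : 'I_m -> 'rV[R]_n) : 'M[R]_(\sum_(l < m) n, d) :=
  \mxcol_(l < m) (A^T *m diag_mx (r l))^T.

(* Main.v *)
From HB Require Import structures.
From Stdlib Require Import ClassicalEpsilon.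
Require Import Defs.
From mathcomp Require Import all_boot all_order all_algebra.
From mathcomp Require Import all_classical all_reals.
Import Order.TTheory GRing.Theory Num.Theory.
Local Open Scope ring_scope.

Section Pinv.
Variable R : realType.

Lemma pinv_uniq p q (C : 'M[R]_(p, q)) X Y : is_pinv C X -> is_pinv C Y -> X = Y.
Proof.
case=> [h1 h2 h3 h4] [k1 k2 k3 k4].
have eX : X = X *m C *m Y.
  transitivity (X *m (C *m X)^T *m (C *m Y)^T); last first.
    by rewrite h3 k3 !mulmxA h2.
  rewrite !trmx_mul.
  have -> : X *m (X^T *m C^T) *m (Y^T *m C^T) = X *m X^T *m (C *m Y *m C)^T.
    by rewrite !trmx_mul !mulmxA.
  rewrite k1 -mulmxA -trmx_mul h3.
  by rewrite mulmxA h2.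
have eY : Y = X *m C *m Y.
  transitivity ((X *m C)^T *m (Y *m C)^T *m Y); last first.
    by rewrite h4 k4 -[in RHS]k2 !mulmxA.
  rewrite !trmx_mul.
  have -> : C^T *m X^T *m (C^T *m Y^T) *m Y = (C *m X *m C)^T *m Y^T *m Y.
    by rewrite !trmx_mul !mulmxA.
  by rewrite h1 -trmx_mul k4 k2.
by rewrite eX -eY.
Qed.

Lemma nsq_ge0 q (x : 'cV[R]_q) : 0 <= (x^T *m x) 0 0.
Proof.
rewrite mxE; apply: sumr_ge0 => i _; rewrite mxE; by rewrite -expr2 sqr_ge0.
Qed.

Lemma nsq0 q (x : 'cV[R]_q) : (x^T *m x) 0 0 = 0 -> x = 0.
Proof.
rewrite mxE => h; apply/matrixP => i j; rewrite ord1 mxE.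
have /eqP := h; rewrite psumr_eq0; last by move=> k _; rewrite mxE -expr2 sqr_ge0.
move=> /allP /(_ i (mem_index_enum _)) /implyP /(_ isT).
by rewrite mxE mulf_eq0 orbb => /eqP.
Qed.

Lemma gram_unit p q (B : 'M[R]_(p, q)) : row_free B^T -> B^T *m B \in unitmx.
Proof.
move=> fr; rewrite -row_free_unit; apply: inj_row_free => v h.
have : (v *m B^T) *m (v *m B^T)^T = 0.
  by rewrite trmx_mul trmxK mulmxA -(mulmxA v) h mul0mx.
move=> h2.
have h3 : v *m B^T = 0.
  have := @nsq0 _ ((v *m B^T)^T); rewrite trmxK h2 mxE => /(_ erefl).
  by move/(congr1 trmx); rewrite trmxK trmx0.
by apply: (row_free_inj fr); rewrite h3 mul0mx.
Qed.

Lemma pinv_fact p r q (B : 'M[R]_(p, r)) (K : 'M[R]_(r, q)) :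
  B^T *m B \in unitmx -> K *m K^T \in unitmx ->
  is_pinv (B *m K) (K^T *m invmx (K *m K^T) *m invmx (B^T *m B) *m B^T).
Proof.
move=> uG uH.
have sG : (invmx (B^T *m B))^T = invmx (B^T *m B) by rewrite trmx_inv trmx_mul trmxK.
have sH : (invmx (K *m K^T))^T = invmx (K *m K^T) by rewrite trmx_inv trmx_mul trmxK.
have AX : B *m K *m (K^T *m invmx (K *m K^T) *m invmx (B^T *m B) *m B^T)
   = B *m invmx (B^T *m B) *m B^T.
  by rewrite -!mulmxA (mulmxA K) (mulmxA (K *m K^T)) mulmxV // mul1mx.
have XA : (K^T *m invmx (K *m K^T) *m invmx (B^T *m B) *m B^T) *m (B *m K)
   = K^T *m invmx (K *m K^T) *m K.
  by rewrite !mulmxA -(mulmxA _ B^T) -(mulmxA _ (invmx (B^T *m B))) mulVmx // mulmx1.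
split.
- by rewrite AX -!mulmxA (mulmxA B^T) (mulmxA (invmx (B^T *m B))) mulVmx // mul1mx.
- by rewrite XA -!mulmxA (mulmxA K) (mulmxA (K *m K^T)) mulmxV // mul1mx.
- by rewrite AX !trmx_mul trmxK sG mulmxA.
- by rewrite XA !trmx_mul trmxK sH mulmxA.
Qed.

Lemma pinv_exists p q (C : 'M[R]_(p, q)) : exists X, is_pinv C X.
Proof.
have fB : row_free (col_base C)^T by rewrite /row_free mxrank_tr; exact: col_base_full.
have fK : row_free ((row_base C)^T)^T by rewrite trmxK row_base_free.
have uG := @gram_unit _ _ _ fB; have uH := @gram_unit _ _ _ fK.
rewrite trmxK in uH.
have := @pinv_fact _ _ _ _ _ uG uH; rewrite mulmx_base => h; by eexists; exact: h.
Qed.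

Lemma pinvP p q (C : 'M[R]_(p, q)) : is_pinv C (Defs.pinv C).
Proof.
rewrite /Defs.pinv; apply: epsilon_spec; exact: pinv_exists.
Qed.

End Pinv.

Set Implicit Arguments. Unset Strict Implicit.
From mathcomp Require Import lra.
Section Norms.
Variable R : realType.

Definition nsq q (x : 'cV[R]_q) : R := (x^T *m x) 0 0.

Lemma nsqE q (x : 'cV[R]_q) : nsq x = \sum_i x i 0 ^+ 2.
Proof. by rewrite /nsq mxE; apply: eq_bigr => i _; rewrite mxE expr2. Qed.

Lemma nsq_ge0' q (x : 'cV[R]_q) : 0 <= nsq x.
Proof. by rewrite nsqE; apply: sumr_ge0 => i _; rewrite sqr_ge0. Qed.

Lemma vnorm2E q (x : 'cV[R]_q) : vnorm2 x = Num.sqrt (nsq x).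
Proof. by rewrite nsqE. Qed.

Lemma nsqZ q k (x : 'cV[R]_q) : nsq (k *: x) = k ^+ 2 * nsq x.
Proof.
rewrite !nsqE mulr_sumr; apply: eq_bigr => i _; rewrite mxE; exact: exprMn.
Qed.

Lemma vnorm2Z q k (x : 'cV[R]_q) : vnorm2 (k *: x) = `|k| * vnorm2 x.
Proof. by rewrite !vnorm2E nsqZ sqrtrM ?sqr_ge0 // sqrtr_sqr. Qed.

Lemma nsqS N q (S : 'M[R]_(N, q)) c (x : 'cV[R]_q) :
  S^T *m S = c%:M -> nsq (S *m x) = c * nsq x.
Proof.
move=> hS; rewrite /nsq trmx_mul mulmxA -(mulmxA x^T) hS mul_mx_scalar.
by rewrite -scalemxAl mxE.
Qed.

Lemma nsqD q (a b : 'cV[R]_q) : a^T *m b = 0 -> nsq (a + b) = nsq a + nsq b.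
Proof.
move=> h.
have h' : b^T *m a = 0 by rewrite -[a]trmxK -trmx_mul h trmx0.
rewrite /nsq; have -> : (a + b)^T = a^T + b^T by rewrite raddfD.
by rewrite mulmxDl !mulmxDr h h' addr0 add0r mxE.
Qed.

Lemma nsqST N q (S : 'M[R]_(N, q)) c (y : 'cV[R]_N) :
  0 < c -> S^T *m S = c%:M -> nsq (S^T *m y) <= c * nsq y.
Proof.
move=> c0 hS.
set w := c^-1 *: (S^T *m y).
have hab : (S *m w)^T *m (y - S *m w) = 0.
  rewrite trmx_mul -mulmxA mulmxBr mulmxA hS /w -scalemxAr mul_scalar_mx.
  by rewrite scalerA mulVf ?gt_eqF // scale1r subrr mulmx0.
have := nsqD hab; rewrite addrC subrK => e.
have h1 : nsq (S *m w) <= nsq y by rewrite e lerDl nsq_ge0'.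
rewrite (nsqS _ hS) /w nsqZ in h1.
have t0 := nsq_ge0' (S^T *m y).
have y0 := nsq_ge0' y.
set t := nsq (S^T *m y) in h1 t0 *.
have : c * (c^-1 ^+ 2 * t) = t / c by rewrite expr2 mulrA mulrA mulfV ?gt_eqF // mul1r mulrC.
move=> e2; rewrite e2 in h1.
by rewrite -ler_pdivrMl // mulrC.
Qed.

Lemma unit_bound p q (M : 'M[R]_(p, q)) :
  exists B, forall x, vnorm2 x = 1 -> vnorm2 (M *m x) <= B.
Proof.
exists (Num.sqrt (\sum_i (\sum_j `|M i j|) ^+ 2)) => x hx.
have n1 : nsq x = 1.
  by rewrite -[nsq x]sqr_sqrtr ?nsq_ge0' // -vnorm2E hx expr1n.
have xb : forall j, `|x j 0| <= 1.
  move=> j; have : x j 0 ^+ 2 <= 1.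
    rewrite -n1 nsqE (bigD1 j) //= lerDl; apply: sumr_ge0 => i _; exact: sqr_ge0.
  move=> h; rewrite ler_norml; apply/andP; split; nra.
rewrite vnorm2E nsqE /vnorm2; apply: ler_wsqrtr; apply: ler_sum => i _.
rewrite mxE.
have : `|\sum_j M i j * x j 0| <= \sum_j `|M i j|.
  apply: le_trans (ler_norm_sum _ _ _) _; apply: ler_sum => j _.
  rewrite normrM; rewrite -{2}[`|M i j|]mulr1; apply: ler_wpM2l => //.
move: (\sum_j M i j * x j 0) (\sum_j `|M i j|) => a b.
rewrite ler_norml => /andP [h1 h2]; nra.
Qed.

End Norms.

Section Spec.
Variable R : realType.

Lemma vnorm2_ge0 q (x : 'cV[R]_q) : 0 <= vnorm2 x.
Proof. exact: sqrtr_ge0. Qed.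

Lemma unit_vec q : (0 < q)%N -> exists x : 'cV[R]_q, vnorm2 x = 1.
Proof.
case: q => // q _; exists (delta_mx 0 0).
rewrite vnorm2E nsqE (bigD1 0) //= big1 ?addr0 ?mxE ?eqxx ?expr1n ?sqrtr1 //.
by move=> i /negbTE hi; rewrite mxE hi /= expr0n.
Qed.

Lemma spec_sup p q (X : 'M[R]_(p, q)) x : vnorm2 x = 1 ->
  vnorm2 (X *m x) <= spec_norm X.
Proof.
move=> hx; have [B hB] := unit_bound X.
apply: sup_upper_bound; last by exists x.
split; first by exists (vnorm2 (X *m x)), x.
by exists B => _ [y hy <-]; exact: hB.
Qed.

Lemma spec_ge0 p q (X : 'M[R]_(p, q)) : (0 < q)%N -> 0 <= spec_norm X.
Proof.
move=> q0; have [x hx] := unit_vec q0.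
exact: le_trans (vnorm2_ge0 _) (spec_sup X hx).
Qed.

Lemma spec_scale N n p (S : 'M[R]_(N, n)) (c : R) (X : 'M[R]_(p, n)) :
  0 < c -> S^T *m S = c%:M -> (0 < n)%N ->
  spec_norm (X *m S^T) = Num.sqrt c * spec_norm X.
Proof.
move=> c0 hS n0.
have sc0 : 0 < Num.sqrt c by rewrite sqrtr_gt0.
have s0 := spec_ge0 X n0.
have claim1 : forall y, vnorm2 y = 1 -> vnorm2 (X *m S^T *m y) <= Num.sqrt c * spec_norm X.
  move=> y hy; rewrite -mulmxA.
  set z := S^T *m y.
  have hz : vnorm2 z <= Num.sqrt c.
    have ny : nsq y = 1 by rewrite -[nsq y]sqr_sqrtr ?nsq_ge0' // -vnorm2E hy expr1n.
    rewrite vnorm2E ler_sqrt; last exact: ltW c0.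
    by have := nsqST y c0 hS; rewrite ny mulr1.
  have [z0|zn0] := eqVneq z 0.
    rewrite z0 mulmx0 vnorm2E /nsq mulmx0 mxE sqrtr0; exact: mulr_ge0 (ltW sc0) s0.
  have t0 : 0 < vnorm2 z.
    rewrite lt_def vnorm2_ge0 andbT vnorm2E sqrtr_eq0 -ltNge.
    rewrite lt_def nsq_ge0' andbT; apply/negP => /eqP h; apply/negP: zn0.
    by rewrite negbK; apply/eqP; apply: nsq0.
  set u := (vnorm2 z)^-1 *: z.
  have hu : vnorm2 u = 1 by rewrite vnorm2Z ger0_norm ?invr_ge0 ?ltW // mulVf ?gt_eqF.
  have -> : z = vnorm2 z *: u by rewrite /u scalerA mulfV ?gt_eqF // scale1r.
  rewrite -scalemxAr vnorm2Z (ger0_norm (vnorm2_ge0 _)).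
  apply: le_trans (ler_wpM2l (ltW t0) (spec_sup X hu)) _.
  by apply: ler_wpM2r.
have claim2 : forall x, vnorm2 x = 1 ->
    exists2 y, vnorm2 y = 1 & vnorm2 (X *m S^T *m y) = Num.sqrt c * vnorm2 (X *m x).
  move=> x hx; exists ((Num.sqrt c)^-1 *: (S *m x)).
    rewrite vnorm2Z vnorm2E (nsqS _ hS) sqrtrM ?ltW // -vnorm2E hx mulr1.
    by rewrite ger0_norm ?invr_ge0 ?ltW // mulVf ?gt_eqF.
  rewrite -scalemxAr -mulmxA (mulmxA S^T) hS mul_scalar_mx -scalemxAr scalerA.
  rewrite vnorm2Z; congr (_ * _).
  rewrite -{2}[c]sqr_sqrtr ?ltW // expr2 mulrA mulVf ?gt_eqF // mul1r.
  by rewrite ger0_norm ?ltW.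
have [x0 hx0] := unit_vec n0.
apply/eqP; rewrite eq_le; apply/andP; split.
  apply: ge_sup.
    by have [y hy _] := claim2 _ hx0; exists (vnorm2 (X *m S^T *m y)), y.
  by move=> _ [y hy <-]; exact: claim1.
rewrite -ler_pdivlMl //; apply: ge_sup.
  by exists (vnorm2 (X *m x0)), x0.
move=> _ [x hx <-]; rewrite ler_pdivlMl //.
have [y hy <-] := claim2 _ hx; exact: spec_sup.
Qed.

Lemma frobE p q (C : 'M[R]_(p, q)) : frob_norm C = Num.sqrt (\tr (C^T *m C)).
Proof.
rewrite /frob_norm /mxtrace exchange_big /=; congr Num.sqrt.
apply: eq_bigr => j _; rewrite mxE; apply: eq_bigr => i _; by rewrite mxE expr2.
Qed.

End Spec.

Section Main.
Variable R : realType.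

Lemma pinv_S N n d (S : 'M[R]_(N, n)) c (A : 'M[R]_(n, d)) X :
  c != 0 -> S^T *m S = c%:M -> is_pinv A X ->
  is_pinv (S *m A) (X *m (c^-1 *: S^T)).
Proof.
move=> c0 hS [h1 h2 h3 h4].
have e1 : S *m A *m (X *m (c^-1 *: S^T)) = c^-1 *: (S *m (A *m X) *m S^T).
  by rewrite scalemxAr !mulmxA.
have e2 : X *m (c^-1 *: S^T) *m (S *m A) = X *m A.
  rewrite -scalemxAr -scalemxAl !mulmxA -(mulmxA X) hS mul_mx_scalar.
  by rewrite -scalemxAl scalerA mulVf // scale1r.
split.
- rewrite e1 -scalemxAl !mulmxA -(mulmxA _ S^T S) hS mul_mx_scalar.
  by rewrite -!scalemxAl scalerA mulVf // scale1r -!mulmxA (mulmxA A) h1.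
- by rewrite e2 mulmxA h2.
- by rewrite e1 linearZ /= !trmx_mul trmxK -trmx_mul h3 !mulmxA.
- by rewrite e2.
Qed.

Lemma kappa_S N n d (S : 'M[R]_(N, n)) c (A : 'M[R]_(n, d)) :
  0 < c -> S^T *m S = c%:M -> (0 < n)%N -> kappa (S *m A) = kappa A.
Proof.
move=> c0 hS n0.
have ep : Defs.pinv (S *m A) = Defs.pinv A *m (c^-1 *: S^T).
  apply: pinv_uniq; first exact: pinvP.
  apply: pinv_S; rewrite ?gt_eqF //; exact: pinvP.
rewrite /kappa ep !frobE.
have -> : (S *m A)^T *m (S *m A) = c *: (A^T *m A).
  by rewrite trmx_mul mulmxA -(mulmxA A^T) hS mul_mx_scalar -scalemxAl scalemxAr.
rewrite mxtraceZ sqrtrM ?ltW //.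
have hS' : (c^-1 *: S)^T *m (c^-1 *: S) = c^-1%:M.
  have -> : (c^-1 *: S)^T = c^-1 *: S^T by rewrite linearZ.
  rewrite -scalemxAl -scalemxAr hS -[c%:M]scalemx1 !scalerA scalemx1.
  congr (_%:M); rewrite -mulrA mulVf ?gt_eqF //.
  by rewrite mulr1.
have := spec_scale (Defs.pinv A) _ hS' n0.
rewrite linearZ /= => ->; last by rewrite invr_gt0.
by rewrite mulrCA !mulrA -sqrtrM ?invr_ge0 ?ltW // mulVf ?gt_eqF // sqrtr1 mul1r.
Qed.

End Main.

Unset Implicit Arguments.
Theorem theorem8 (R : realType) (n d m : nat) (A : 'M[R]_(n, d))
  (r : 'I_m -> 'rV[R]_n) :
  A != 0 -> (0 < m)%N ->
  (forall (l : 'I_m) (i : 'I_n), r l 0 i = 1 \/ r l 0 i = -1) ->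
  kappa (onebit_P A r) = kappa A.
Proof.
move=> A0 m0 hr.
have n0 : (0 < n)%N.
  case: n A r hr A0 => // A _ _; by rewrite flatmx0 eqxx.
set S := \mxcol_(l < m) diag_mx (r l).
have eP : onebit_P A r = S *m A.
  rewrite /onebit_P /S mxcol_mul; apply: eq_mxcol => l.
  by rewrite trmx_mul trmxK tr_diag_mx.
have hS : S^T *m S = (m%:R : R)%:M.
  rewrite /S tr_mxcol mul_mxrow_mxcol.
  rewrite (eq_bigr (fun _ => 1%:M)); last first.
    move=> l _; rewrite tr_diag_mx mulmx_diag -diag_const_mx; congr diag_mx.
    apply/matrixP => i j; rewrite !mxE.
    by case: (hr l j) => ->; rewrite ?mulN1r ?opprK ?mulr1.
  by rewrite sumr_const card_ord -raddfMn.
rewrite eP; apply: kappa_S hS n0.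
by rewrite ltr0n.
Qed.
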